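(* Let $K$ be a field, $R$ an $\mathbb N$-graded $K$-algebra, and let $A=\sigma(R)\langle x_1,x_2\rangle$ be a connected graded quasi-commutative skew PBW extension of $R$. Then $A$ is a connected graded trimmed right double Ore extension of $R$.
   Context: All algebras are over a field $K$; a graded algebra $B$ is connected if $B_0=K$. A ring $A$ is a skew PBW extension of $R$ in $x_1,\dots,x_n$, written $\sigma(R)\langle x_1,\dots,x_n\rangle$, if $R\subseteq A$; $A$ is a free left $R$-module with basis the monomials $x_1^{\alpha_1}\cdots x_n^{\alpha_n}$; for each $i$ and $r\in R\setminus\{0\}$ there is $c_{i,r}\in R\setminus\{0\}$ with $x_ir-c_{i,r}x_i\in R$; and for all $i,j$ there is $c_{i,j}\in R\setminus\{0\}$ with $x_jx_i-c_{i,j}x_ix_j\in R+Rx_1+\cdots+Rx_n$. Then $x_ir=\sigma_i(r)x_i+\delta_i(r)$ with $\sigma_i$ an injective endomorphism and $\delta_i$ a $\sigma_i$-derivation. It is quasi-commutative if in fact $x_ir=c_{i,r}x_i$ and $x_jx_i=c_{i,j}x_ix_j$ (with $c_{i,r},c_{i,j}\in R\setminus\{0\}$). It is bijective if all $\sigma_i$ are bijective and all $c_{i,j}$ invertible. It is graded if it is bijective, $R$ is $\mathbb N$-graded, each $\sigma_i$ is graded, $\delta_i(R_m)\subseteq R_{m+1}$, and $x_jx_i-c_{i,j}x_ix_j\in R_2+R_1x_1+\cdots+R_1x_n$ with $c_{i,j}\in R_0$; the grading is $A_p=\mathrm{span}\{r_tx^\alpha: r_t\in R_t,\ t+|\alpha|=p\}$.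 A $K$-algebra $B\supseteq R$ is a right double Ore extension of $R$ if it is generated by $R$ and $x_1,x_2$; $x_2x_1=p_{12}x_1x_2+p_{11}x_1^2+\tau_1x_1+\tau_2x_2+\tau_0$ with $p_{12},p_{11}\in K$, $\tau_i\in R$; $B$ is a free left $R$-module with basis $\{x_1^ax_2^b\}$; and $x_1R+x_2R\subseteq Rx_1+Rx_2+R$. Writing $x_ir=\sigma_{i1}(r)x_1+\sigma_{i2}(r)x_2+\delta_i(r)$, it is trimmed if $\delta_1=\delta_2=0$ and $\tau_0=\tau_1=\tau_2=0$. It is graded if all relations are homogeneous with $\deg x_1=\deg x_2=1$. *)

(* Defs.v *)
From HB Require Import structures.
From mathcomp Require Import all_boot all_order all_algebra.
Set Implicit Arguments. Unset Strict Implicit. Unset Printing Implicit Defensive.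
Import GRing.Theory.
Local Open Scope ring_scope.

(* Setting: K a field, A a K-algebra (not necessarily commutative),
   R a subset of A (the coefficient algebra), Rg m = R_m the homogeneous
   components of a grading of R, and x1 x2 : A the two generators. *)

Section Defs.
Variables (K : fieldType) (A : algType K).

Definition xx (x1 x2 : A) (i : bool) : A := if i then x2 else x1.

Definition is_subalg (R : {pred A}) : Prop :=
  [/\ 1 \in R,
      (forall a b, a \in R -> b \in R -> a + b \in R),
      (forall a, a \in R -> - a \in R),
      (forall a b, a \in R -> b \in R -> a * b \in R) &
      (forall (k : K) a, a \in R -> k *: a \in R)].

Definition is_Ngrading (R : {pred A}) (Rg : nat -> {pred A}) : Prop :=
  (forall m a, a \in Rg m -> a \in R) /\
  (forall m, 0 \in Rg m) /\
  (forall m a b, a \in Rg m -> b \in Rg m -> a + b \in Rg m) /\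
  (forall m (k : K) a, a \in Rg m -> k *: a \in Rg m) /\
  (forall m n a b, a \in Rg m -> b \in Rg n -> a * b \in Rg (m + n)) /\
  1 \in Rg 0 /\
  (forall r, r \in R -> exists N (f : nat -> A),
      (forall m, f m \in Rg m) /\ r = \sum_(m < N) f m) /\
  (forall N (f : nat -> A), (forall m, f m \in Rg m) ->
      \sum_(m < N) f m = 0 -> forall m, (m < N)%N -> f m = 0).

Definition mono_sum (x1 x2 : A) (N : nat) (c : nat -> nat -> A) : A :=
  \sum_(i < N) \sum_(j < N) c i j * (x1 ^+ i * x2 ^+ j).

Definition free_basis (R : {pred A}) (x1 x2 : A) : Prop :=
  (forall z : A, exists N (c : nat -> nat -> A),
      (forall i j, c i j \in R) /\ z = mono_sum x1 x2 N c) /\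
  (forall N (c : nat -> nat -> A), (forall i j, c i j \in R) ->
      mono_sum x1 x2 N c = 0 ->
      forall i j, (i < N)%N -> (j < N)%N -> c i j = 0).

Definition generated_by (R : {pred A}) (x1 x2 : A) : Prop :=
  forall S : {pred A}, is_subalg S -> {subset R <= S} -> x1 \in S -> x2 \in S ->
    forall z : A, z \in S.

Definition skewPBW2 (R : {pred A}) (x1 x2 : A) : Prop :=
  [/\ is_subalg R,
      free_basis R x1 x2,
      (forall i r, r \in R -> r != 0 -> exists c, [/\ c \in R, c != 0 &
          xx x1 x2 i * r - c * xx x1 x2 i \in R]) &
      (forall i j, exists c, [/\ c \in R, c != 0 &
          exists r0 r1 r2, [/\ r0 \in R, r1 \in R, r2 \in R &
            xx x1 x2 j * xx x1 x2 i - c * xx x1 x2 i * xx x1 x2 j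
              = r0 + r1 * x1 + r2 * x2]])].

Definition quasi_comm_skewPBW2 (R : {pred A}) (x1 x2 : A) : Prop :=
  [/\ skewPBW2 R x1 x2,
      (forall i r, r \in R -> r != 0 -> exists c, [/\ c \in R, c != 0 &
          xx x1 x2 i * r = c * xx x1 x2 i]) &
      (forall i j, exists c, [/\ c \in R, c != 0 &
          xx x1 x2 j * xx x1 x2 i = c * xx x1 x2 i * xx x1 x2 j])].

Definition graded_skewPBW2 (R : {pred A}) (Rg : nat -> {pred A}) (x1 x2 : A) : Prop :=
  [/\ skewPBW2 R x1 x2,
      is_Ngrading R Rg,
      (forall i, exists sigma : A -> A,
        [/\ (forall r, r \in R -> sigma r \in R /\
               xx x1 x2 i * r - sigma r * xx x1 x2 i \in R),
            {in R &, injective sigma},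
            (forall s, s \in R -> exists2 r, r \in R & sigma r = s),
            (forall m r, r \in Rg m -> sigma r \in Rg m) &
            (forall m r, r \in Rg m ->
               xx x1 x2 i * r - sigma r * xx x1 x2 i \in Rg m.+1)]) &
      (forall i j, exists c, [/\ c \in Rg 0, c != 0,
          (exists2 d, d \in R & c * d = 1 /\ d * c = 1) &
          exists r0 r1 r2, [/\ r0 \in Rg 2, r1 \in Rg 1, r2 \in Rg 1 &
            xx x1 x2 j * xx x1 x2 i - c * xx x1 x2 i * xx x1 x2 j
              = r0 + r1 * x1 + r2 * x2]])].

(* the homogeneous component of degree p of A:
   A_p = span{ r_t x1^i x2^j : r_t \in R_t, t + i + j = p } *)
Definition deg_comp (Rg : nat -> {pred A}) (x1 x2 : A) (p : nat) (z : A) : Prop :=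
  exists N (c : nat -> nat -> A),
    [/\ (forall i j, (i + j <= p)%N -> c i j \in Rg (p - (i + j))%N),
        (forall i j, (p < i + j)%N -> c i j = 0) &
        z = mono_sum x1 x2 N c].

Definition connected (Rg : nat -> {pred A}) (x1 x2 : A) : Prop :=
  forall z : A, deg_comp Rg x1 x2 0 z <-> exists k : K, z = k%:A.

Definition connected_graded_qc_skewPBW2 (R : {pred A}) (Rg : nat -> {pred A}) (x1 x2 : A) : Prop :=
  [/\ quasi_comm_skewPBW2 R x1 x2, graded_skewPBW2 R Rg x1 x2 &
      connected Rg x1 x2].

Definition right_double_Ore (R : {pred A}) (x1 x2 : A) : Prop :=
  [/\ is_subalg R,
      generated_by R x1 x2,
      (exists (p12 p11 : K) t0 t1 t2, [/\ t0 \in R, t1 \in R, t2 \in R &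
          x2 * x1 = p12 *: (x1 * x2) + p11 *: (x1 ^+ 2)
                    + t1 * x1 + t2 * x2 + t0]),
      free_basis R x1 x2 &
      (forall i r, r \in R -> exists a b d, [/\ a \in R, b \in R, d \in R &
          xx x1 x2 i * r = a * x1 + b * x2 + d])].

(* trimmed: delta_1 = delta_2 = 0 and tau_0 = tau_1 = tau_2 = 0 *)
Definition trimmed (R : {pred A}) (x1 x2 : A) : Prop :=
  (exists p12 p11 : K, x2 * x1 = p12 *: (x1 * x2) + p11 *: (x1 ^+ 2)) /\
  (forall i r, r \in R -> exists a b, [/\ a \in R, b \in R &
      xx x1 x2 i * r = a * x1 + b * x2]).

(* graded: all relations homogeneous with deg x1 = deg x2 = 1 *)
Definition graded_rdo (R : {pred A}) (Rg : nat -> {pred A}) (x1 x2 : A) : Prop :=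
  [/\ is_Ngrading R Rg,
      (exists (p12 p11 : K) t0 t1 t2, [/\ t0 \in Rg 2, t1 \in Rg 1, t2 \in Rg 1 &
          x2 * x1 = p12 *: (x1 * x2) + p11 *: (x1 ^+ 2)
                    + t1 * x1 + t2 * x2 + t0]) &
      (forall i m r, r \in Rg m -> exists a b d,
          [/\ a \in Rg m, b \in Rg m, d \in Rg m.+1 &
          xx x1 x2 i * r = a * x1 + b * x2 + d])].

Definition connected_graded_trimmed_rdo (R : {pred A}) (Rg : nat -> {pred A}) (x1 x2 : A) : Prop :=
  [/\ right_double_Ore R x1 x2, trimmed R x1 x2, graded_rdo R Rg x1 x2 &
      connected Rg x1 x2].

End Defs.

(* Main.v *)
Require Import Defs.
From mathcomp Require Import all_boot all_order all_algebra.
Local Open Scope ring_scope.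
Import GRing.Theory.

Theorem corollary3p3 (K : fieldType) (A : algType K) (R : {pred A})
    (Rg : nat -> {pred A}) (x1 x2 : A) :
  connected_graded_qc_skewPBW2 R Rg x1 x2 ->
  connected_graded_trimmed_rdo R Rg x1 x2.
Proof.
case=> [[[subR freeR _ _] qr qx] [_ grad sig gx] conn].
have [R1 RD RN RM RZ] := subR.
have R0 : 0 \in R by rewrite -(subrr (1:A)); apply: RD => //; apply: RN.
have [RgR [Rg0 _]] := grad.
have [k xk] : exists k : K, x2 * x1 = k *: (x1 * x2).
  have [c [cR _ ec]] := qx false true.
  have [c' [c'0 _ _ [r0 [r1 [r2 [h0 h1 h2 e']]]]]] := gx false true.
  simpl in ec, e'.
  pose f (i j : nat) : A := match i, j with
    | S O, S O => c - c' | O, O => - r0 | S O, O => - r1 | O, S O => - r2 | _, _ => 0 end.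
  have fR : forall i j, f i j \in R.
    move=> [|[|i]] [|[|j]] //=; try (apply: RN; apply: RgR; eassumption).
    by apply: RD => //; apply: RN; apply: RgR; eauto.
  have fs : mono_sum x1 x2 2 f = 0.
    rewrite /mono_sum !big_ord_recr !big_ord0 /= !add0r !expr0 !expr1 !mulr1 !mul1r.
    rewrite ec in e'.
    have -> : (c - c') * (x1 * x2) = r0 + r1 * x1 + r2 * x2.
      by rewrite -e' mulrBl !mulrA.
    by rewrite !mulNr -opprD [r0 + r1 * x1 + r2 * x2]addrAC [- (r1 * x1) + _]addrC addrK addNr.
  have := freeR.2 2 f fR fs 1 1 (erefl _) (erefl _).
  rewrite /f => /eqP; rewrite subr_eq0 => /eqP ecc.
  have [k ek] : exists k : K, c' = k%:A.
    apply/(conn c').1.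
    exists 1%N, (fun i j : nat => if (i == 0%N) && (j == 0%N) then c' else 0); split.
    - by move=> [|i] [|j] //.
    - by move=> [|i] [|j] //.
    - by rewrite /mono_sum !big_ord_recr !big_ord0 /= !add0r !expr0 !mulr1.
  by exists k; rewrite ec ecc ek -mulrA mulr_algl.
have Sx : forall (S : {pred A}), is_subalg S -> 0 \in S /\ forall x n, x \in S -> x ^+ n \in S.
  move=> S [S1 SD SN SM SZ]; split.
    by rewrite -(subrr (1:A)); apply: SD => //; apply: SN.
  by move=> x n xS; elim: n => [|n IH]; rewrite ?expr0 // exprS; apply: SM.
have comm : forall i r, r \in R -> exists a b, [/\ a \in R, b \in R &
      xx x1 x2 i * r = a * x1 + b * x2].
  move=> i r rR; have [->|rn] := eqVneq r 0.
    by exists 0, 0; rewrite !mul0r mulr0 addr0.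
  have [c [cR _ ->]] := qr i r rR rn.
  case: i => /=.
    by exists 0, c; rewrite mul0r add0r.
  by exists c, 0; rewrite mul0r addr0.
split.
- split => //.
  + move=> S SS sub Sx1 Sx2 z.
    have [S0 SX] := Sx S SS; have [S1 SD SN SM SZ] := SS.
    have [N [cf [cR ->]]] := freeR.1 z.
    rewrite /mono_sum; apply: (big_ind (fun x => x \in S)) => // i _.
    apply: (big_ind (fun x => x \in S)) => // j _.
    by apply: SM (sub _ (cR i j)) (SM _ _ (SX _ _ Sx1) (SX _ _ Sx2)).
  + exists k, 0, 0, 0, 0; split => //.
    by rewrite scale0r !mul0r !addr0.
  + move=> i r rR; have [a [b [aR bR e]]] := comm i r rR.
    by exists a, b, 0; rewrite addr0.
- split; first by exists k, 0; rewrite scale0r addr0.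
  exact: comm.
- split => //.
  + exists k, 0, 0, 0, 0; split => //.
    by rewrite scale0r !mul0r !addr0.
  + move=> i m r rm; have [sg [_ _ _ h4 h5]] := sig i.
    case: i h5 => /= h5.
      exists 0, (sg r), (x2 * r - sg r * x2); split => //; first exact: h4.
        exact: h5.
      by rewrite mul0r add0r addrC subrK.
    exists (sg r), 0, (x1 * r - sg r * x1); split => //; first exact: h4.
      exact: h5.
    by rewrite mul0r addr0 addrC subrK.
- exact: conn.
Qed.
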